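(* Let $G=(V,E)$ be a minimal hypergraph, let $V'\subseteq V$, and let $v\in V'$. Then $\mathcal{I}_v(G[V'])=(\mathcal{I}_v(G))[V']$, i.e. inverting at $v$ and taking the induced sub-hypergraph on $V'$ commute.
   Context: A simple hypergraph is a pair $G=(V,E)$ with $V$ a finite set and $E\subseteq 2^V$. For $e,f\in E$ with $e\subseteq f$, $e$ is a subedge of $f$; $f$ is minimal if its only subedge in $E$ is itself, and $G$ is a minimal hypergraph if every edge is minimal. $\mathrm{Min}(G)$ denotes the minimal hypergraph obtained from $G$ by deleting all non-minimal edges. For $V'\subseteq V$: the induced sub-hypergraph $G[V']$ is the hypergraph $(V', E\cap 2^{V'})$ (edges of $G$ contained in $V'$); the weak induced sub-hypergraph $G\langle V'\rangle$ is the (not necessarily minimal) hypergraph $(V',\{e\cap V' : e\in E\})$. The vertex inversion of $G$ at $v\in V$ is $\mathcal{I}_v(G)=\mathrm{Min}(G\langle V\setminus\{v\}\rangle)$. For a hypergraph $H$ whose vertex set does not contain $v$, $H[V']$ means the induced sub-hypergraph on $V'$ intersected with the vertex set of $H$. (Algebraically, $\mathcal{I}_x$ applied to the hypergraph of a squarefree monomial ideal $I$ gives the hypergraph of $I(x=1)$.) *)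

(* Defs.v *)
From mathcomp Require Import all_boot.
Set Implicit Arguments. Unset Strict Implicit. Unset Printing Implicit Defensive.

Record hypergraph (T : finType) := Hypergraph {
  hverts : {set T};
  hedges : {set {set T}} }.

Definition wf_hypergraph (T : finType) (G : hypergraph T) : Prop :=
  forall e, e \in hedges G -> e \subset hverts G.

Definition minimal_edge (T : finType) (G : hypergraph T) (e : {set T}) : bool :=
  [forall f in hedges G, (f \subset e) ==> (f == e)].

Definition minimal_hypergraph (T : finType) (G : hypergraph T) : Prop :=
  forall e, e \in hedges G -> minimal_edge G e.

Definition Min (T : finType) (G : hypergraph T) : hypergraph T :=
  Hypergraph (hverts G) [set e in hedges G | minimal_edge G e].

Definition induced (T : finType) (G : hypergraph T) (V' : {set T}) : hypergraph T :=
  Hypergraph (V' :&: hverts G) [set e in hedges G | e \subset V'].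

Definition weak_induced (T : finType) (G : hypergraph T) (V' : {set T}) : hypergraph T :=
  Hypergraph V' [set e :&: V' | e in hedges G].

Definition vinv (T : finType) (G : hypergraph T) (v : T) : hypergraph T :=
  Min (weak_induced G (hverts G :\ v)).

(* Main.v *)
Require Import Defs.
From mathcomp Require Import all_boot.

Theorem lemma2p9 (T : finType) (G : hypergraph T) (V' : {set T}) (v : T) :
  wf_hypergraph G -> minimal_hypergraph G ->
  V' \subset hverts G -> v \in V' ->
  vinv (induced G V') v = induced (vinv G v) V'.
Proof.
move=> wf _ sV vV.
rewrite /vinv /Min /induced /weak_induced /=.
set V := hverts G; set E := hedges G.
have eqV : (V' :&: V) :\ v = V' :&: (V :\ v).
  by apply/setP => x; rewrite !inE; case: (x == v); case: (x \in V'); case: (x \in V).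
set F2 := [set e :&: (V :\ v) | e in E].
have eqF : [set e :&: ((V' :&: V) :\ v) | e in [set e in E | e \subset V']]
           = [set g in F2 | g \subset V'].
  apply/setP => g; rewrite !inE; apply/imsetP/andP.
  - case=> e; rewrite inE => /andP [eE eV'] ->.
    split; last by apply/subsetP => x; rewrite !inE => /andP [/(subsetP eV')].
    apply/imsetP; exists e => //; apply/setP => x; rewrite !inE.
    case xe: (x \in e) => //=.
    by rewrite (subsetP eV' x xe) (subsetP sV x (subsetP eV' x xe)) !andbT.
  - case=> /imsetP [e eE ->] sub.
    have eV' : e \subset V'.
      apply/subsetP => x xe.
      case: (eqVneq x v) => [-> //|xv].
      apply: (subsetP sub); rewrite !inE xv xe /=.
      exact: (subsetP (wf e eE)).
    exists e; first by rewrite inE eE eV'.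
    apply/setP => x; rewrite !inE.
    case xe: (x \in e) => //=.
    by rewrite (subsetP eV' x xe) (subsetP sV x (subsetP eV' x xe)) !andbT.
congr Hypergraph; first by rewrite eqV.
rewrite eqF; apply/setP => f; rewrite !inE /minimal_edge.
case fF: (f \in F2) => //=; case fV: (f \subset V'); rewrite /= ?andbF //.
rewrite andbT; apply/forallP/forallP => H g; move: (H g); rewrite !inE.
- case: (g \in F2) => //=; case gf: (g \subset f) => //=.
  by rewrite (subset_trans gf fV).
- by case: (g \in F2) => //=; case: (g \subset V') => //=; case: (g \subset f).
Qed.
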